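(* Let $\gamma\ge1$ and let $\mathcal{C}\in\mathbb{C}^{2\times2\times\cdots\times2}$ be a tensor of order $2\gamma$ that is Hermitian and $\gamma$-semisymmetric. For $\theta,\phi\in\mathbb{R}$ let $x=(\cos\theta,\ \sin\theta\,e^{-\mathrm{i}\phi})^T$ and $y=(-\sin\theta\,e^{\mathrm{i}\phi},\ \cos\theta)^T$. Then there exist real symmetric matrices $M^{(\alpha,\beta)}\in\mathbb{R}^{3\times3}$, $1\le\alpha,\beta\le\gamma$, determined by $\mathcal{C}$, and real constants $c_x,c_y$ (independent of $\theta,\phi$) such that for all $\theta,\phi\in\mathbb{R}$ $$\mathcal{C}[x]=\sum_{\alpha=1}^{\gamma}\sum_{\beta=1}^{\gamma}z_{\alpha,\beta}^TM^{(\alpha,\beta)}z_{\alpha,\beta}+c_x,\qquad \mathcal{C}[y]=\sum_{\alpha=1}^{\gamma}\sum_{\beta=1}^{\gamma}(-1)^{\alpha}z_{\alpha,\beta}^TM^{(\alpha,\beta)}z_{\alpha,\beta}+c_y,$$ where $z_{\alpha,\beta}=z_{\alpha,\beta}(\theta,\phi)=(\cos\alpha\theta,\,-\sin\alpha\theta\cos\beta\phi,\,-\sin\alpha\theta\sin\beta\phi)^T$.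
   Context: For a vector $a\in\mathbb{C}^2$, $\mathcal{C}[a]=\sum_{i_1,\dots,i_{2\gamma}\in\{1,2\}}\mathcal{C}_{i_1\cdots i_{2\gamma}}\,\overline{a_{i_1}}\cdots\overline{a_{i_\gamma}}\,a_{i_{\gamma+1}}\cdots a_{i_{2\gamma}}$ (i.e. $\mathcal{C}$ contracted with $a^H$ in modes $1,\dots,\gamma$ and with $a^T$ in modes $\gamma+1,\dots,2\gamma$). $\mathcal{C}$ is Hermitian if $\mathcal{C}_{i_1\cdots i_\gamma i_{\gamma+1}\cdots i_{2\gamma}}=\overline{\mathcal{C}_{i_{\gamma+1}\cdots i_{2\gamma}i_1\cdots i_\gamma}}$ for all indices; it is $\gamma$-semisymmetric if its entries are invariant under any permutation of the first $\gamma$ indices and under any permutation of the last $\gamma$ indices. *)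

(* Defs.v *)
From HB Require Import structures.
From mathcomp Require Import all_boot all_order all_algebra all_fingroup.
From mathcomp Require Import complex.
From mathcomp Require Import reals trigo.
Set Implicit Arguments. Unset Strict Implicit. Unset Printing Implicit Defensive.
Import Order.TTheory GRing.Theory Num.Theory.
Local Open Scope ring_scope.
Local Open Scope complex_scope.

(* A tensor of order 2*g over C^2 (indices in {1,2}, here 'I_2 = {0,1}):
   a function from multi-indices (i_1,...,i_{2g}) : 'I_(g+g) -> 'I_2
   to complex numbers.  The first g modes are the positions lshift g j,
   the last g modes are the positions rshift g j (j : 'I_g). *)
Definition tensor (R : rcfType) (g : nat) := {ffun 'I_(g + g) -> 'I_2} -> R[i].

Definition swap_halves (g : nat) (k : 'I_(g + g)) : 'I_(g + g) :=
  match split k with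
  | inl j => rshift g j
  | inr j => lshift g j
  end.

Definition perm_halves (g : nat) (s t : 'S_g) (k : 'I_(g + g)) : 'I_(g + g) :=
  match split k with
  | inl j => lshift g (s j)
  | inr j => rshift g (t j)
  end.

Definition hermitian_tensor (R : rcfType) (g : nat) (C : tensor R g) : Prop :=
  forall idx : {ffun 'I_(g + g) -> 'I_2},
    C idx = (C [ffun k => idx (swap_halves k)])^*.

Definition semisymmetric_tensor (R : rcfType) (g : nat) (C : tensor R g) : Prop :=
  forall (s t : 'S_g) (idx : {ffun 'I_(g + g) -> 'I_2}),
    C [ffun k => idx (perm_halves s t k)] = C idx.

Definition tensor_eval (R : rcfType) (g : nat) (C : tensor R g) (a : 'I_2 -> R[i]) : R[i] :=
  \sum_(idx : {ffun 'I_(g + g) -> 'I_2})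
     C idx * (\prod_(j < g) (a (idx (lshift g j)))^*)
           * (\prod_(j < g) a (idx (rshift g j))).

Definition xvec (R : realType) (th ph : R) : 'I_2 -> R[i] :=
  fun k => if k == ord0 then (cos th)%:C
           else (sin th)%:C * (cos ph -i* sin ph).

Definition yvec (R : realType) (th ph : R) : 'I_2 -> R[i] :=
  fun k => if k == ord0 then - (sin th)%:C * (cos ph +i* sin ph)
           else (cos th)%:C.

Definition zvec (R : realType) (a b : nat) (th ph : R) : 'cV[R]_3 :=
  \col_(k < 3) (if k == 0%N :> nat then cos (a%:R * th)
                else if k == 1%N :> nat then - sin (a%:R * th) * cos (b%:R * ph)
                else - sin (a%:R * th) * sin (b%:R * ph)).

Definition qform (R : realType) (M : 'M[R]_3) (z : 'cV[R]_3) : R :=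
  ((z^T *m M *m z) ord0 ord0).

(* Main.v *)
Require Import Defs.
From HB Require Import structures.
From mathcomp Require Import all_boot all_order all_algebra all_fingroup.
From mathcomp Require Import complex.
From mathcomp Require Import reals trigo.
From mathcomp Require Import ring lra zify.
From Stdlib Require Import FunctionalExtensionality.
Set Warnings "-notation-overridden,-ambiguous-paths".
Import Order.TTheory GRing.Theory Num.Theory.
Local Open Scope ring_scope.
Local Open Scope complex_scope.
Section Part1.
Variable R : realType.
Variable g : nat.

Definition Vset (F : R -> R -> R) := exists (M : nat -> nat -> 'M[R]_3) (c : R),
  (forall a b, (M a b)^T = M a b) /\
  forall th ph, F th ph = \sum_(1 <= a < g.+1) \sum_(1 <= b < g.+1)
             qform (M a b) (zvec a b th ph) + c.

Lemma qformE (M : 'M[R]_3) (z : 'cV[R]_3) :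
  qform M z = \sum_i \sum_j z i 0 * M i j * z j 0.
Proof.
rewrite /qform !mxE exchange_big /=; apply: eq_bigr => j _.
rewrite !mxE mulr_suml; apply: eq_bigr => i _; by rewrite !mxE.
Qed.

Lemma qformD (M1 M2 : 'M[R]_3) (z : 'cV[R]_3) : qform (M1 + M2) z = qform M1 z + qform M2 z.
Proof.
rewrite !qformE -big_split; apply: eq_bigr => i _; rewrite -big_split.
apply: eq_bigr => j _; by rewrite !mxE mulrDr mulrDl.
Qed.

Lemma qformZ k (M : 'M[R]_3) (z : 'cV[R]_3) : qform (k *: M) z = k * qform M z.
Proof.
rewrite !qformE mulr_sumr; apply: eq_bigr => i _; rewrite mulr_sumr.
apply: eq_bigr => j _; rewrite !mxE; ring.
Qed.

Lemma qform0 (z : 'cV[R]_3) : qform 0 z = 0.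
Proof. by rewrite -(scale0r (0 : 'M[R]_3)) qformZ mul0r. Qed.

Lemma V_add F1 F2 : Vset F1 -> Vset F2 -> Vset (fun th ph => F1 th ph + F2 th ph).
Proof.
move=> [M1 [c1 [S1 E1]]] [M2 [c2 [S2 E2]]].
exists (fun a b => M1 a b + M2 a b), (c1 + c2); split.
  move=> a b; apply/matrixP => i j; rewrite !mxE.
  move/matrixP: (S1 a b) => /(_ i j); rewrite mxE => ->.
  by move/matrixP: (S2 a b) => /(_ i j); rewrite mxE => ->.
move=> th ph; rewrite E1 E2.
set S1' := \sum_(1 <= a < g.+1) \sum_(1 <= b < g.+1) qform (M1 a b) _.
set S2' := \sum_(1 <= a < g.+1) \sum_(1 <= b < g.+1) qform (M2 a b) _.
have -> : \sum_(1 <= a < g.+1) \sum_(1 <= b < g.+1)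
   qform (M1 a b + M2 a b) (zvec a b th ph) = S1' + S2'.
  rewrite /S1' /S2' -big_split; apply: eq_bigr => a _; rewrite -big_split.
  apply: eq_bigr => b _; exact: qformD.
ring.
Qed.

Lemma V_scale k F : Vset F -> Vset (fun th ph => k * F th ph).
Proof.
move=> [M [c [S E]]]; exists (fun a b => k *: M a b), (k * c); split.
  move=> a b; apply/matrixP => i j; rewrite !mxE.
  by move/matrixP: (S a b) => /(_ i j); rewrite mxE => ->.
move=> th ph; rewrite E mulrDr mulr_sumr; congr (_ + _).
apply: eq_bigr => a _; rewrite mulr_sumr; apply: eq_bigr => b _.
by rewrite qformZ.
Qed.

Lemma V_const c : Vset (fun _ _ => c).
Proof.
exists (fun _ _ => 0), c; split; first by move=> *; apply/matrixP => i j; rewrite !mxE.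
move=> th ph; rewrite big1 ?add0r // => a _; rewrite big1 // => b _; exact: qform0.
Qed.

Lemma V_ext F1 F2 : Vset F1 -> (forall th ph, F1 th ph = F2 th ph) -> Vset F2.
Proof.
move=> HV E; have -> : F2 = F1 by apply: functional_extensionality => th;
  apply: functional_extensionality => ph; rewrite E.
done.
Qed.

Lemma V_sum (I : Type) (s : seq I) (F : I -> R -> R -> R) :
  (forall i, Vset (F i)) -> Vset (fun th ph => \sum_(i <- s) F i th ph).
Proof.
move=> HF; elim: s => [|i s IH].
  eapply V_ext; first exact: (V_const 0).
  by move=> th ph /=; rewrite big_nil.
eapply V_ext; first exact: (V_add _ _ (HF i) IH).
by move=> th ph /=; rewrite big_cons.
Qed.

Definition Bmx (i0 j0 : 'I_3) : 'M[R]_3 :=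
  \matrix_(i, j) (((i == i0) && (j == j0))%:R + ((i == j0) && (j == i0))%:R).

Lemma qformB i0 j0 (z : 'cV[R]_3) : qform (Bmx i0 j0) z = 2 * (z i0 0 * z j0 0).
Proof.
rewrite qformE.
under eq_bigr => i _ do under eq_bigr => j _ do rewrite mxE mulrDr mulrDl.
under eq_bigr => i _ do rewrite big_split /=.
rewrite big_split /=.
have H : forall a b : 'I_3, \sum_i \sum_j z i 0 * ((i == a) && (j == b))%:R * z j 0
    = z a 0 * z b 0.
  move=> a b; rewrite (bigD1 a) //= [X in _ + X]big1 ?addr0.
    rewrite (bigD1 b) //= [X in _ + X]big1 ?addr0.
      by rewrite !eqxx /= mulr1.
    by move=> j /negbTE Hj; rewrite Hj eqxx /= mulr0 mul0r.
  move=> i /negbTE Hi; apply: big1 => j _; by rewrite Hi /= mulr0 mul0r.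
rewrite !H; ring.
Qed.

Lemma V_gen a b (i0 j0 : 'I_3) : (1 <= a <= g)%N -> (1 <= b <= g)%N ->
  Vset (fun th ph => zvec a b th ph i0 0 * zvec a b th ph j0 0).
Proof.
move=> Ha Hb.
exists (fun a' b' => if (a' == a) && (b' == b) then (2^-1) *: Bmx i0 j0 else 0), 0.
split.
  move=> a' b'; case: ifP => _; apply/matrixP => i j; rewrite !mxE //.
  by rewrite (addrC ((i == i0) && _)%:R) andbC (andbC (j == j0)).
move=> th ph; rewrite addr0.
rewrite (bigD1_seq a) /=; last exact: iota_uniq.
  2: by rewrite mem_index_iota; lia.
rewrite [X in _ + X]big1 ?addr0; last first.
  move=> a' /negbTE Ha'; apply: big1 => b' _; by rewrite Ha' /= qform0.
rewrite (bigD1_seq b) /=; last exact: iota_uniq.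
  2: by rewrite mem_index_iota; lia.
rewrite [X in _ + X]big1 ?addr0; last first.
  by move=> b' /negbTE Hb'; rewrite eqxx Hb' /= qform0.
rewrite !eqxx /= qformZ qformB mulrA mulVf ?mul1r //.
by rewrite pnatr_eq0.
Qed.

End Part1.
Arguments V_add {R g F1 F2}.
Arguments V_scale {R g} k {F}.
Arguments V_gen {R g} a b i0 j0.
Arguments V_ext {R g F1 F2}.
Section Part2.
Variable R : realType.

Inductive span (S : (R -> R) -> Prop) : (R -> R) -> Prop :=
| span0 : span S (fun _ => 0)
| spanS h a f : S h -> span S f -> span S (fun x => a * h x + f x).
Arguments span0 {S}.
Arguments spanS {S h} a {f}.

Lemma fext (f1 f2 : R -> R) : (forall x, f1 x = f2 x) -> f1 = f2.
Proof. exact: functional_extensionality. Qed.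

Lemma span_ext S f1 f2 : span S f1 -> (forall x, f1 x = f2 x) -> span S f2.
Proof. by move=> H /fext <-. Qed.
Arguments span_ext {S f1 f2}.


Lemma span_gen S h : S h -> span S h.
Proof.
move=> Sh; apply: (span_ext (spanS 1 Sh span0)) => x; by rewrite mul1r addr0.
Qed.
Arguments span_gen {S h}.


Lemma span_add S f1 f2 : span S f1 -> span S f2 -> span S (fun x => f1 x + f2 x).
Proof.
elim=> [|h a f Sh _ IH] H2.
  by apply: (span_ext H2) => x; rewrite add0r.
by apply: (span_ext (spanS a Sh (IH H2))) => x; rewrite addrA.
Qed.
Arguments span_add {S f1 f2}.


Lemma span_scale S k f : span S f -> span S (fun x => k * f x).
Proof.
elim=> [|h a f' Sh _ IH].
  by apply: (span_ext span0) => x; rewrite mulr0.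
by apply: (span_ext (spanS (k * a) Sh IH)) => x; rewrite mulrDr mulrA.
Qed.
Arguments span_scale {S} k {f}.


Lemma span_mono (S S' : (R -> R) -> Prop) f : (forall h, S h -> S' h) -> span S f -> span S' f.
Proof.
move=> HS; elim=> [|h a f' Sh _ IH]; first exact: span0.
exact: spanS (HS _ Sh) IH.
Qed.
Arguments span_mono {S S' f}.


Lemma span_mulgen (S S' : (R -> R) -> Prop) (k : R -> R) f :
  (forall h, S h -> span S' (fun x => h x * k x)) -> span S f ->
  span S' (fun x => f x * k x).
Proof.
move=> HS; elim=> [|h a f' Sh _ IH].
  by apply: (span_ext span0) => x; rewrite mul0r.
apply: (span_ext (span_add (span_scale a (HS h Sh)) IH)) => x.
by rewrite mulrDl mulrA.
Qed.
Arguments span_mulgen {S S'} k {f}.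


Lemma span_flatten (S S' : (R -> R) -> Prop) f :
  (forall h, S h -> span S' h) -> span S f -> span S' f.
Proof.
move=> HS Hf; apply: (span_ext (span_mulgen (fun _ => 1) _ Hf)) => [h Sh|x].
  by apply: (span_ext (HS h Sh)) => x; rewrite mulr1.
by rewrite mulr1.
Qed.
Arguments span_flatten {S S' f}.


Definition Ge (g : nat) (h : R -> R) := exists j, (j <= g)%N /\ h = (fun t => cos ((j%:R * t) *+ 2)).
Definition Go (g : nat) (h : R -> R) := exists j, (1 <= j <= g)%N /\ h = (fun t => sin ((j%:R * t) *+ 2)).
Definition Gs (g : nat) (h : R -> R) := exists j, (1 <= j <= g)%N /\ h = (fun t => sin (j%:R * t) ^+ 2).

Lemma cosmul (x y : R) : cos x * cos y = 2^-1 * cos (x + y) + 2^-1 * cos (x - y).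
Proof. rewrite cosD cosB; field; rewrite ?pnatr_eq0 //. Qed.

Lemma sinmul (x y : R) : sin x * cos y = 2^-1 * sin (x + y) + 2^-1 * sin (x - y).
Proof. rewrite sinD sinB; field; rewrite ?pnatr_eq0 //. Qed.

Lemma Ge_mono g h : Ge g h -> Ge g.+1 h.
Proof. by case=> j [Hj ->]; exists j; split => //; lia. Qed.

Lemma Go_mono g h : Go g h -> Go g.+1 h.
Proof. by case=> j [Hj ->]; exists j; split => //; lia. Qed.

Lemma sin_span g j : (j <= g)%N -> span (Go g) (fun t => sin ((j%:R * t) *+ 2)).
Proof.
case: j => [|j] Hj.
  by apply: (span_ext span0) => x; rewrite mul0r mul0rn sin0.
by apply: span_gen; exists j.+1; split => //; lia.
Qed.

Lemma natS2 (n : nat) (t : R) : (n.+1%:R * t) *+ 2 = (n%:R * t) *+ 2 + t *+ 2.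
Proof. by rewrite -natr1 mulrDl mul1r mulrnDl. Qed.

Lemma Ge_cos2 g h : Ge g h -> span (Ge g.+1) (fun t => h t * cos (t *+ 2)).
Proof.
case=> j [Hj ->]; case: j Hj => [|j] Hj.
  apply: span_gen; exists 1%N; split => //; apply: fext => t.
  have -> : (0%:R * t) *+ 2 = 0 :> R by rewrite -mulr_natr; ring.
  by rewrite cos0 mul1r mul1r.
have G1 : Ge g.+1 (fun t => cos ((j.+2%:R * t) *+ 2)).
  by exists j.+2; split => //; lia.
have G2 : Ge g.+1 (fun t => cos ((j%:R * t) *+ 2)).
  by exists j; split => //; lia.
apply: (span_ext (span_add (span_scale (2^-1) (span_gen G1))
   (span_scale (2^-1) (span_gen G2)))).
move=> t; rewrite cosmul; congr (_ * cos _ + _ * cos _).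
  by rewrite natS2.
by rewrite natS2 addrK.
Qed.

Lemma Go_cos2 g h : Go g h -> span (Go g.+1) (fun t => h t * cos (t *+ 2)).
Proof.
case=> j [Hj ->].
apply: (span_ext (span_add (span_scale (2^-1) (sin_span g.+1 j.+1 _))
   (span_scale (2^-1) (sin_span g.+1 j.-1 _)))).
- lia.
- lia.
move=> t; rewrite sinmul; congr (_ * sin _ + _ * sin _).
  by rewrite natS2.
case: j Hj => [|j] Hj //.
by rewrite natS2 addrK.
Qed.

Lemma cos2E (t : R) : cos t ^+ 2 = 2^-1 + 2^-1 * cos (t *+ 2).
Proof. rewrite cos_mulr2n; field; rewrite ?pnatr_eq0 //. Qed.

Lemma sin2E (t : R) : sin t ^+ 2 = 2^-1 - 2^-1 * cos (t *+ 2).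
Proof. rewrite cos_mulr2n sin2cos2; field; rewrite ?pnatr_eq0 //. Qed.

Section Mul.
Variable G : nat -> (R -> R) -> Prop.
Hypothesis Gmono : forall g h, G g h -> G g.+1 h.
Hypothesis Gcos2 : forall g h, G g h -> span (G g.+1) (fun t => h t * cos (t *+ 2)).

Lemma mul_cos2 g f : span (G g) f -> span (G g.+1) (fun t => cos t ^+ 2 * f t).
Proof.
move=> Hf; apply: (span_ext (span_mulgen (fun t => cos t ^+ 2) _ Hf)) => [h Sh|t].
  apply: (span_ext (span_add (span_scale (2^-1) (span_gen (Gmono _ _ Sh)))
                    (span_scale (2^-1) (Gcos2 _ _ Sh)))) => t.
  by rewrite cos2E; ring.
by rewrite mulrC.
Qed.

Lemma mul_sin2 g f : span (G g) f -> span (G g.+1) (fun t => sin t ^+ 2 * f t).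
Proof.
move=> Hf; apply: (span_ext (span_mulgen (fun t => sin t ^+ 2) _ Hf)) => [h Sh|t].
  apply: (span_ext (span_add (span_scale (2^-1) (span_gen (Gmono _ _ Sh)))
                    (span_scale (- 2^-1) (Gcos2 _ _ Sh)))) => t.
  by rewrite sin2E; ring.
by rewrite mulrC.
Qed.
End Mul.
Arguments mul_cos2 {G} Gmono Gcos2 {g f}.
Arguments mul_sin2 {G} Gmono Gcos2 {g f}.

Lemma L1 g : forall u v, (u + v = g.*2)%N ->
  (odd v -> span (Go g) (fun t => cos t ^+ u * sin t ^+ v)) /\
  (~~ odd v -> span (Ge g) (fun t => cos t ^+ u * sin t ^+ v)).
Proof.
elim: g => [|g IH] u v Huv.
  have [-> ->] : u = 0%N /\ v = 0%N by lia.
  split => // _; apply: span_gen; exists 0%N; split => //; apply: fext => t.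
  have -> : (0%:R * t) *+ 2 = 0 :> R by rewrite mul0r mul0rn.
  by rewrite cos0 !expr0 mulr1.
case: u Huv => [|[|u]] Huv.
- case: v Huv => [|[|v]] Huv; try lia.
  have [H1 H2] := IH 0%N v ltac:(lia).
  split => Hv; move: Hv => /=; rewrite negbK => Hv.
    apply: (span_ext (mul_sin2 Go_mono Go_cos2 (H1 Hv))) => t; rewrite !exprS; ring.
  apply: (span_ext (mul_sin2 Ge_mono Ge_cos2 (H2 Hv))) => t; rewrite !exprS; ring.
- case: v Huv => [|[|v]] Huv; try lia.
    have -> : g = 0%N by lia.
    split => // _; apply: (span_ext (span_scale (2^-1) (span_gen (h := fun t => sin ((1%:R * t) *+ 2)) _))).
      by exists 1%N.
    by move=> t; rewrite mulr1n mul1r sin_mulr2n !expr1; field; rewrite ?pnatr_eq0 //.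
  have [H1 H2] := IH 1%N v ltac:(lia).
  split => Hv; move: Hv => /=; rewrite negbK => Hv.
    apply: (span_ext (mul_sin2 Go_mono Go_cos2 (H1 Hv))) => t; rewrite !exprS; ring.
  apply: (span_ext (mul_sin2 Ge_mono Ge_cos2 (H2 Hv))) => t; rewrite !exprS; ring.
- have [H1 H2] := IH u v ltac:(lia).
  split => Hv.
    apply: (span_ext (mul_cos2 Go_mono Go_cos2 (H1 Hv))) => t; rewrite !exprS; ring.
  apply: (span_ext (mul_cos2 Ge_mono Ge_cos2 (H2 Hv))) => t; rewrite !exprS; ring.
Qed.

Lemma L2 g f : span (Ge g) f -> span (Gs g) (fun t => f t - f 0).
Proof.
elim=> [|h a f' Sh _ IH].
  by apply: (span_ext span0) => x; rewrite subrr.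
have Hh : span (Gs g) (fun t => h t - h 0).
  case: Sh => j [Hj ->]; case: j Hj => [|j] Hj.
    by apply: (span_ext span0) => x; rewrite !mul0r !mul0rn subrr.
  apply: (span_ext (span_scale (-2) (span_gen (h := fun t => sin (j.+1%:R * t) ^+ 2) _))).
    by exists j.+1; split => //; lia.
  move=> t; rewrite mulr0 mul0rn cos0 cos_mulr2n sin2cos2; ring.
apply: (span_ext (span_add (span_scale a Hh) IH)).
by move=> x; ring.
Qed.

End Part2.
Arguments span {R}.
Arguments span0 {R S}.
Arguments spanS {R S h} a {f}.
Arguments Ge {R}.
Arguments Go {R}.
Arguments Gs {R}.
Arguments L1 {R} g u v.
Arguments L2 {R g f}.
Section Part3.
Variable R : realType.
Variable g : nat.
Hypothesis g1 : (1 <= g)%N.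

Local Notation V := (Vset R g).

Lemma V_of_span S (w : R -> R) f :
  (forall h, S h -> V (fun th ph => h th * w ph)) -> span S f ->
  V (fun th ph => f th * w ph).
Proof.
move=> HS; elim=> [|h a f' Sh _ IH].
  by eapply V_ext; [exact: (V_const R g 0) | move=> th ph; rewrite mul0r].
eapply V_ext; first exact: (V_add (V_scale a (HS h Sh)) IH).
by move=> th ph /=; rewrite mulrDl mulrA.
Qed.

Definition o0 : 'I_3 := @Ordinal 3 0 isT.
Definition o1 : 'I_3 := @Ordinal 3 1 isT.
Definition o2 : 'I_3 := @Ordinal 3 2 isT.

Lemma zv0 a b th ph : zvec a b th ph o0 0 = cos (a%:R * th :> R).
Proof. by rewrite /zvec mxE. Qed.
Lemma zv1 a b th ph : zvec a b th ph o1 0 = - sin (a%:R * th :> R) * cos (b%:R * ph).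
Proof. by rewrite /zvec mxE. Qed.
Lemma zv2 a b th ph : zvec a b th ph o2 0 = - sin (a%:R * th :> R) * sin (b%:R * ph).
Proof. by rewrite /zvec mxE. Qed.

Lemma VGe h : Ge g h -> V (fun th ph => h th * 1).
Proof.
case=> j [Hj ->]; case: j Hj => [|j] Hj.
  eapply V_ext; first exact: (V_const R g 1).
  move=> th ph /=; have -> : (0%:R * th) *+ 2 = 0 :> R by rewrite mul0r mul0rn.
  by rewrite cos0 mulr1.
have G0 := @V_gen R g j.+1 1 o0 o0 ltac:(lia) ltac:(lia).
eapply V_ext; first exact: (V_add (V_scale 2 G0)
   (V_const R g (-1))).
move=> th ph /=; rewrite !zv0 cos_mulr2n; ring.
Qed.

Lemma VGo k h : (1 <= k <= g)%N -> Go g h ->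
  V (fun th ph => h th * cos (k%:R * ph)) /\ V (fun th ph => h th * sin (k%:R * ph)).
Proof.
move=> Hk [j [Hj ->]]; split.
  eapply V_ext; first exact: (V_scale (-2) (V_gen j k o0 o1 Hj Hk)).
  move=> th ph /=; rewrite zv0 zv1 sin_mulr2n; ring.
eapply V_ext; first exact: (V_scale (-2) (V_gen j k o0 o2 Hj Hk)).
move=> th ph /=; rewrite zv0 zv2 sin_mulr2n; ring.
Qed.

Lemma VGs b h : (1 <= b <= g)%N -> Gs g h ->
  V (fun th ph => h th * cos ((b%:R * ph) *+ 2)) /\
  V (fun th ph => h th * sin ((b%:R * ph) *+ 2)).
Proof.
move=> Hb [j [Hj ->]]; split.
  eapply V_ext; first exact: (V_add (V_gen j b o1 o1 Hj Hb)
      (V_scale (-1) (V_gen j b o2 o2 Hj Hb))).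
  move=> th ph /=; rewrite !zv1 !zv2 cos_mulr2n.
  apply/eqP; rewrite -subr_eq0; apply/eqP.
  transitivity (- (sin (j%:R * th) ^+ 2 * (cos (b%:R * ph) ^+ 2 + sin (b%:R * ph) ^+ 2 - 1))).
    ring.
  by rewrite cos2Dsin2 subrr mulr0 oppr0.
eapply V_ext; first exact: (V_scale 2 (V_gen j b o1 o2 Hj Hb)).
move=> th ph /=; rewrite zv1 zv2 sin_mulr2n; ring.
Qed.

Lemma MT0 (p q u1 u2 : nat) (A B : R) : (u1 + p = g)%N -> (u2 + q = g)%N -> (q <= p)%N ->
  V (fun th ph => (cos th ^+ u1 * sin th ^+ p * (cos th ^+ u2 * sin th ^+ q)) *
      (A * cos (p%:R * ph - q%:R * ph) + B * sin (p%:R * ph - q%:R * ph))).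
Proof.
move=> H1 H2 Hqp.
have [L1o L1e] := @L1 R g (u1 + u2) (p + q) ltac:(lia).
set f := fun t : R => cos t ^+ (u1 + u2) * sin t ^+ (p + q).
have Ef : forall th, cos th ^+ u1 * sin th ^+ p * (cos th ^+ u2 * sin th ^+ q) = f th.
  by move=> th; rewrite /f !exprD; ring.
have Ek : forall ph : R, p%:R * ph - q%:R * ph = (p - q)%N%:R * ph.
  by move=> ph; rewrite natrB // mulrBl.
have Hv : (p + q = (p - q) + q.*2)%N by lia.
move: Ef Ek; set k := (p - q)%N => Ef Ek.
have Hkg : (k <= g)%N by lia.
have Hpar : odd (p + q) = odd k by rewrite Hv oddD odd_double addbF.
have Hkdef : k = (p - q)%N by [].
clearbody k.
case: k Ek Hpar Hkg Hkdef => [|k] Ek Hpar Hkg Hkdef.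
  have Hf : span (Ge g) f by apply: L1e; rewrite Hpar.
  eapply V_ext; first exact: (V_scale A (V_of_span _ _ _ VGe Hf)).
  move=> th ph /=; rewrite Ef Ek mul0r cos0 sin0; ring.
case/boolP: (odd k.+1) => Hodd.
  have Hf : span (Go g) f by apply: L1o; rewrite Hpar.
  have Hk1 : (1 <= k.+1 <= g)%N by lia.
  have V1 := V_of_span _ _ _ (fun h Sh => (VGo _ _ Hk1 Sh).1) Hf.
  have V2 := V_of_span _ _ _ (fun h Sh => (VGo _ _ Hk1 Sh).2) Hf.
  eapply V_ext; first exact: (V_add (V_scale A V1) (V_scale B V2)).
  move=> th ph /=; rewrite Ef Ek; ring.
have Hb : k.+1 = (k.+1)./2.*2 by rewrite even_halfK.
set b := (k.+1)./2 in Hb.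
have Hb1 : (1 <= b <= g)%N by lia.
have Ek' : forall ph : R, p%:R * ph - q%:R * ph = (b%:R * ph) *+ 2.
  by move=> ph; rewrite Ek Hb -mul2n natrM -mulrA mulr_natl.
have Hf : span (Ge g) f by apply: L1e; rewrite Hpar.
have Hf' := L2 Hf.
have Hf0 : f 0 = 0.
  have Hpq : (p + q)%N = (p + q - 1).+1 by lia.
  by rewrite /f sin0 Hpq exprS mul0r mulr0.
have V1 := V_of_span _ _ _ (fun h Sh => (VGs _ _ Hb1 Sh).1) Hf'.
have V2 := V_of_span _ _ _ (fun h Sh => (VGs _ _ Hb1 Sh).2) Hf'.
eapply V_ext; first exact: (V_add (V_scale A V1) (V_scale B V2)).
move=> th ph /=; rewrite Ef Ek' Hf0; ring.
Qed.

End Part3.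
Lemma MT (R : realType) (g : nat) (g1 : (1 <= g)%N) (p q u1 u2 : nat) (A B : R) :
  (u1 + p = g)%N -> (u2 + q = g)%N ->
  Vset R g (fun th ph => (cos th ^+ u1 * sin th ^+ p * (cos th ^+ u2 * sin th ^+ q)) *
      (A * cos (p%:R * ph - q%:R * ph) + B * sin (p%:R * ph - q%:R * ph))).
Proof.
move=> H1 H2; case: (leqP q p) => Hqp; first exact: MT0.
eapply V_ext; first exact: (@MT0 R g g1 q p u2 u1 A (- B) H2 H1 (ltnW Hqp)).
move=> th ph /=; rewrite -(opprB (p%:R * ph)) cosN sinN; ring.
Qed.

Section Part4.
Variable R : realType.

Definition E (t : R) : R[i] := cos t +i* sin t.

Lemma EM s t : E s * E t = E (s + t).
Proof. by rewrite /E cosD sinD; apply/eqP; rewrite eq_complex /= !eqxx /= addrC eqxx. Qed.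

Lemma E0 : E 0 = 1.
Proof. by rewrite /E cos0 sin0. Qed.

Lemma EJ t : (E t)^* = E (- t).
Proof. by rewrite /E cosN sinN. Qed.

Lemma prodE (I : Type) (r : seq I) (F T : I -> R) :
  \prod_(i <- r) ((F i)%:C * E (T i)) = (\prod_(i <- r) F i)%:C * E (\sum_(i <- r) T i).
Proof.
elim: r => [|i r IH]; first by rewrite !big_nil E0 mulr1.
rewrite !big_cons IH rmorphM /= -EM; ring.
Qed.

Lemma ReSum (I : Type) (r : seq I) (F : I -> R[i]) :
  complex.Re (\sum_(i <- r) F i) = \sum_(i <- r) complex.Re (F i).
Proof.
elim: r => [|i r IH]; first by rewrite !big_nil.
by rewrite !big_cons -IH; case: (F i); case: (\sum_(j <- r) F j).
Qed.

Lemma ReTerm (c : R[i]) (r t : R) :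
  complex.Re (c * r%:C * E t) = r * (complex.Re c * cos t + (- complex.Im c) * sin t).
Proof. case: c => a b; rewrite /E /=; ring. Qed.

Lemma real_of_conj (z : R[i]) : z^* = z -> z = (complex.Re z)%:C.
Proof.
case: z => a b /= [] Hb; apply/eqP; rewrite eq_complex /= eqxx /=.
apply/eqP; have : b *+ 2 = 0 by rewrite mulr2n -{1}Hb addNr.
by move/eqP; rewrite mulrn_eq0 /= => /eqP.
Qed.

End Part4.
Arguments E {R}.
Section Part5.
Variable R : realType.

Lemma swap_l g (j : 'I_g) : swap_halves (lshift g j) = rshift g j.
Proof. by rewrite /swap_halves -[lshift g j]/(unsplit (inl _ j)) unsplitK. Qed.
Lemma swap_r g (j : 'I_g) : swap_halves (rshift g j) = lshift g j.
Proof. by rewrite /swap_halves -[rshift g j]/(unsplit (inr _ j)) unsplitK. Qed.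

Definition swapidx g (idx : {ffun 'I_(g + g) -> 'I_2}) : {ffun 'I_(g + g) -> 'I_2} :=
  [ffun k => idx (swap_halves k)].
Arguments swapidx {g}.

Lemma swapidxK g : involutive (@swapidx g).
Proof.
move=> idx; apply/ffunP => k; rewrite !ffunE.
rewrite -[k]splitK; case: (split k) => j.
  by rewrite [unsplit _]/= !swap_l !swap_r.
by rewrite [unsplit _]/= !swap_r !swap_l.
Qed.

Lemma tensor_eval_real g (C : tensor R g) (a : 'I_2 -> R[i]) :
  hermitian_tensor C -> tensor_eval C a = (complex.Re (tensor_eval C a))%:C.
Proof.
move=> HC; apply: real_of_conj.
rewrite /tensor_eval rmorph_sum /=.
rewrite [RHS](reindex_inj (inv_inj (@swapidxK g))) /=.
apply: eq_bigr => idx _.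
rewrite !rmorphM /= !rmorph_prod /=.
have -> : (C idx)^* = C (swapidx idx) by rewrite (HC idx) conjcK.
under eq_bigr => j _ do rewrite conjcK.
rewrite /swapidx.
under [in RHS]eq_bigr => j _ do rewrite ffunE swap_l.
under [X in _ = _ * X]eq_bigr => j _ do rewrite ffunE swap_r.
by rewrite mulrAC.
Qed.

Definition rho (th : R) (k : 'I_2) : R := if k == ord0 then cos th else sin th.
Definition tau (ph : R) (k : 'I_2) : R := if k == ord0 then 0 else ph.

Lemma xvecE th ph k : xvec th ph k = (rho th k)%:C * E (- tau ph k).
Proof.
rewrite /xvec /rho /tau; case: ifP => _.
  by rewrite oppr0 E0 mulr1.
by rewrite /E cosN sinN.
Qed.

Lemma xvecJ th ph k : (xvec th ph k)^* = (rho th k)%:C * E (tau ph k).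
Proof.
rewrite /xvec /rho /tau /E; case: ifP => _; rewrite ?cos0 ?sin0;
  apply/eqP; rewrite eq_complex /=; apply/andP; split; apply/eqP; ring.
Qed.

Lemma prod_if g (P : pred 'I_g) (x y : R) :
  \prod_(j < g) (if P j then x else y) = x ^+ #|P| * y ^+ #|[predC P]|.
Proof.
rewrite (bigID P) /=.
rewrite (eq_bigr (fun=> x)) => [|j ->//].
rewrite [X in _ * X](eq_bigr (fun=> y)) => [|j /negbTE ->//].
by rewrite -!prodr_const.
Qed.

Lemma sum_if g (P : pred 'I_g) (ph : R) :
  \sum_(j < g) (if P j then 0 else ph) = #|[predC P]|%:R * ph.
Proof.
rewrite (bigID P) /= big1 ?add0r => [|j ->//].
rewrite (eq_bigr (fun=> ph)) => [|j /negbTE ->//].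
rewrite mulr_natl -sumr_const.
by apply: eq_bigl => j; rewrite inE.
Qed.

End Part5.
Arguments rho {R}.
Arguments tau {R}.
Arguments swapidx {g}.
Section Part6.
Variable R : realType.
Variable g : nat.
Variable C : tensor R g.

Definition P1 (idx : {ffun 'I_(g + g) -> 'I_2}) : pred 'I_g := fun j => idx (lshift g j) == ord0.
Definition P2 (idx : {ffun 'I_(g + g) -> 'I_2}) : pred 'I_g := fun j => idx (rshift g j) == ord0.

Definition Fx (idx : {ffun 'I_(g + g) -> 'I_2}) (th ph : R) : R :=
  (cos th ^+ #|P1 idx| * sin th ^+ #|[predC P1 idx]| *
    (cos th ^+ #|P2 idx| * sin th ^+ #|[predC P2 idx]|)) *
  (complex.Re (C idx) * cos (#|[predC P1 idx]|%:R * ph - #|[predC P2 idx]|%:R * ph)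
   + (- complex.Im (C idx)) * sin (#|[predC P1 idx]|%:R * ph - #|[predC P2 idx]|%:R * ph)).

Lemma xvecJ' (th ph : R) k : ((xvec th ph k)^*)%R = (rho th k)%:C * E (tau ph k).
Proof. exact: xvecJ. Qed.

Lemma ReTx (th ph : R) : complex.Re (tensor_eval C (xvec th ph)) = \sum_idx Fx idx th ph.
Proof.
rewrite /tensor_eval ReSum; apply: eq_bigr => idx _.
under eq_bigr => j _ do rewrite xvecJ'.
under [X in _ * _ * X]eq_bigr => j _ do rewrite xvecE.
rewrite !prodE.
set A1 := \prod_(j < g) _; set A2 := \prod_(j < g) _.
set T1 := \sum_(j < g) _; set T2 := \sum_(j < g) _.
have -> : C idx * (A1%:C * E T1) * (A2%:C * E T2) = C idx * (A1 * A2)%:C * E (T1 + T2).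
  by rewrite rmorphM /= -EM; ring.
rewrite ReTerm /Fx.
have -> : A1 = cos th ^+ #|P1 idx| * sin th ^+ #|[predC P1 idx]| by rewrite /A1 /rho prod_if.
have -> : A2 = cos th ^+ #|P2 idx| * sin th ^+ #|[predC P2 idx]| by rewrite /A2 /rho prod_if.
have -> : T1 + T2 = #|[predC P1 idx]|%:R * ph - #|[predC P2 idx]|%:R * ph.
  by rewrite /T1 /T2 sumrN /tau !sum_if.
by [].
Qed.

Lemma Vx : (1 <= g)%N -> Vset R g (fun th ph => complex.Re (tensor_eval C (xvec th ph))).
Proof.
move=> g1.
eapply V_ext; first apply: (@V_sum R g _ (index_enum _) Fx) => idx.
  apply: MT => //; by rewrite cardC card_ord.
by move=> th ph /=; rewrite ReTx.
Qed.

End Part6.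
Section Part7.
Variable R : realType.

Lemma rot (a : nat) : exists eps : R, eps ^+ 2 = 1 /\ forall th : R,
  (~~ odd a -> cos (a%:R * (th + pi / 2)) = eps * cos (a%:R * th) /\
               sin (a%:R * (th + pi / 2)) = eps * sin (a%:R * th)) /\
  (odd a -> cos (a%:R * (th + pi / 2)) = eps * (- sin (a%:R * th)) /\
            sin (a%:R * (th + pi / 2)) = eps * cos (a%:R * th)).
Proof.
elim: a => [|a [eps [He IH]]].
  exists 1; split; first by rewrite expr1n.
  move=> th; split => H; last by [].
  by rewrite !mul0r !mul1r.
have EY : forall th : R, a.+1%:R * (th + pi / 2) = (a%:R * (th + pi / 2) + th) + pi / 2.
  by move=> th; rewrite -natr1 mulrDl mul1r addrA.
have EX : forall th : R, a.+1%:R * th = a%:R * th + th.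
  by move=> th; rewrite -natr1 mulrDl mul1r.
case/boolP: (odd a) => Ha.
  exists (- eps); split; first by rewrite sqrrN.
  move=> th; have [H1 H2] := (IH th).2 Ha; split => /= Hodd.
    rewrite EY EX cosDpihalf sinDpihalf sinD cosD sinD cosD H1 H2; split; ring.
  by rewrite /= Ha in Hodd.
exists eps; split => // th.
have [H1 H2] := (IH th).1 Ha; split => /= Hodd.
  by rewrite /= Ha in Hodd.
rewrite EY EX cosDpihalf sinDpihalf sinD cosD sinD cosD H1 H2; split; ring.
Qed.

Definition bil (M : 'M[R]_3) (x y : 'cV[R]_3) :=
  \sum_i \sum_j (x i 0 * M i j * y j 0 + y i 0 * M i j * x j 0).

Lemma qform_lin (M : 'M[R]_3) (z x y : 'cV[R]_3) (al be : R) :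
  (forall i, z i 0 = al * x i 0 + be * y i 0) ->
  qform M z = al ^+ 2 * qform M x + al * be * bil M x y + be ^+ 2 * qform M y.
Proof.
move=> Hz; rewrite !qformE /bil !mulr_sumr -!big_split; apply: eq_bigr => i _.
rewrite !mulr_sumr -!big_split; apply: eq_bigr => j _ /=.
rewrite !Hz; ring.
Qed.

Definition e0v : 'cV[R]_3 := \col_(k < 3) (if k == 0%N :> nat then 1 else 0).
Definition uv (b : nat) (ph : R) : 'cV[R]_3 :=
  \col_(k < 3) (if k == 0%N :> nat then 0
                else if k == 1%N :> nat then - cos (b%:R * ph) else - sin (b%:R * ph)).

Lemma zvec_lin a b (th ph x : R) :
  forall i, zvec a b x ph i 0 = cos (a%:R * x) * e0v i 0 + sin (a%:R * x) * uv b ph i 0.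
Proof.
move=> i; rewrite !mxE; case: ifP => _; first by rewrite mulr1 mulr0 addr0.
case: ifP => _; ring.
Qed.

Lemma shiftq (M : 'M[R]_3) a b (th ph : R) :
  qform M (zvec a b (th + pi / 2) ph) =
  (-1) ^+ a * qform M (zvec a b th ph) +
  (if odd a then qform M e0v + qform M (uv b ph) else 0).
Proof.
rewrite (qform_lin M _ _ _ _ _ (zvec_lin a b th ph (th + pi / 2))).
rewrite (qform_lin M _ _ _ _ _ (zvec_lin a b th ph th)).
have [eps [He Hr]] := rot a; have [He1 Ho1] := Hr th.
rewrite -signr_odd; case/boolP: (odd a) => Ha.
  have [-> ->] := Ho1 Ha.
  rewrite !exprMn He !mul1r /= expr1.
  have -> : eps * - sin (a%:R * th) * (eps * cos (a%:R * th))
          = (eps ^+ 2) * (- sin (a%:R * th) * cos (a%:R * th)) by ring.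
  rewrite He mul1r.
  apply/eqP; rewrite -subr_eq0; apply/eqP.
  transitivity ((cos (a%:R * th) ^+ 2 + sin (a%:R * th) ^+ 2 - 1) *
                 (qform M e0v + qform M (uv b ph))).
    ring.
  by rewrite cos2Dsin2 subrr mul0r.
have [-> ->] := He1 Ha.
rewrite !exprMn He !mul1r /= ?expr0 ?mul1r ?addr0.
have -> : eps * cos (a%:R * th) * (eps * sin (a%:R * th))
        = (eps ^+ 2) * (cos (a%:R * th) * sin (a%:R * th)) by ring.
by rewrite He mul1r.
Qed.

End Part7.
Arguments e0v {R}.
Arguments uv {R}.
Section Part8.
Variable R : realType.

Lemma tensor_eval_ext g (C : tensor R g) (a b : 'I_2 -> R[i]) :
  (forall k, a k = b k) -> tensor_eval C a = tensor_eval C b.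
Proof. by move=> H; have -> : a = b by apply: functional_extensionality. Qed.

Lemma tensor_eval_scale g (C : tensor R g) (w : R[i]) (a : 'I_2 -> R[i]) :
  ((w^*)%R * w = 1) -> tensor_eval C (fun k => w * a k) = tensor_eval C a.
Proof.
move=> Hw; rewrite /tensor_eval; apply: eq_bigr => idx _.
under eq_bigr => j _ do rewrite rmorphM.
rewrite !big_split /=.
have HXY : (\prod_(j < g) (w^*)%R) * (\prod_(j < g) w) = 1.
  by rewrite -big_split /=; apply: big1 => j _.
move: HXY; set X := \prod_(j < g) (w^*)%R; set Y := \prod_(j < g) w => HXY.
set A := \prod_(j < g) (a (idx (lshift g j)))^*%R.
set B := \prod_(j < g) a (idx (rshift g j)).
transitivity (C idx * A * B * (X * Y)); first by ring.
by rewrite HXY mulr1.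
Qed.

End Part8.
Lemma eq_mod (R : realType) (t k x y : R) :
  x - y = k * (1 - (cos t ^+ 2 + sin t ^+ 2)) -> x = y.
Proof. by rewrite cos2Dsin2 subrr mulr0 => /eqP; rewrite subr_eq0 => /eqP. Qed.

Lemma yE (R : realType) (th ph : R) k : yvec th ph k = E ph * xvec (th + pi / 2) ph k.
Proof.
rewrite /yvec /xvec /E cosDpihalf sinDpihalf; case: ifP => _;
  apply/eqP; rewrite eq_complex /=; apply/andP; split; apply/eqP.
- ring.
- ring.
- by apply: (@eq_mod R ph (cos th)); ring.
- ring.
Qed.

Lemma EJE (R : realType) (ph : R) : ((E ph)^*)%R * E ph = 1.
Proof.
have -> : ((E ph)^*)%R = E (- ph) := EJ _ ph.
by rewrite EM addNr E0.
Qed.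

Theorem proposition3p1 (R : realType) (g : nat) (C : tensor R g) :
  (1 <= g)%N ->
  hermitian_tensor C ->
  semisymmetric_tensor C ->
  exists (M : nat -> nat -> 'M[R]_3) (cx cy : R),
    (forall a b : nat, (1 <= a <= g)%N -> (1 <= b <= g)%N -> (M a b)^T = M a b) /\
    (forall th ph : R,
       tensor_eval C (xvec th ph) =
         (\sum_(1 <= a < g.+1) \sum_(1 <= b < g.+1)
             qform (M a b) (zvec a b th ph) + cx)%:C) /\
    (forall th ph : R,
       tensor_eval C (yvec th ph) =
         (\sum_(1 <= a < g.+1) \sum_(1 <= b < g.+1)
             (-1) ^+ a * qform (M a b) (zvec a b th ph) + cy)%:C).
Proof.
move=> g1 HC _.
have [M [cx [HM Hx]]] := @Vx R g C g1.
have HX : forall th ph, tensor_eval C (xvec th ph) =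
   (\sum_(1 <= a < g.+1) \sum_(1 <= b < g.+1) qform (M a b) (zvec a b th ph) + cx)%:C.
  by move=> th ph; rewrite (@tensor_eval_real R g C _ HC) Hx.
pose H (ph : R) := \sum_(1 <= a < g.+1) \sum_(1 <= b < g.+1)
   (if odd a then qform (M a b) e0v + qform (M a b) (uv b ph) else 0).
pose Xs (th ph : R) := \sum_(1 <= a < g.+1) \sum_(1 <= b < g.+1)
             (-1) ^+ a * qform (M a b) (zvec a b th ph).
have key : forall th ph, tensor_eval C (yvec th ph) = (Xs th ph + H ph + cx)%:C.
  move=> th ph.
  rewrite (@tensor_eval_ext R g C _ _ (yE _ th ph)) (@tensor_eval_scale R g C _ _ (EJE _ ph)) HX.
  congr ((_ + cx)%:C); rewrite /Xs /H -big_split; apply: eq_bigr => a _.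
  rewrite -big_split; apply: eq_bigr => b _; exact: shiftq.
have HH : forall ph, H ph = H 0.
  move=> ph.
  have Ey : tensor_eval C (yvec 0 ph) = tensor_eval C (yvec 0 0).
    apply: tensor_eval_ext => k; rewrite /yvec sin0; case: ifP => // _.
    by apply/eqP; rewrite eq_complex /=; apply/andP; split; apply/eqP; ring.
  have EX : Xs 0 ph = Xs 0 0.
    rewrite /Xs; apply: eq_bigr => a _; apply: eq_bigr => b _.
    congr (_ * qform _ _); apply/matrixP => i j; rewrite !mxE mulr0 sin0 !oppr0 !mul0r.
    by case: ifP.
  move: Ey; rewrite !key EX => /complexI /addIr /addrI.
  done.
exists M, cx, (H 0 + cx); split; first by move=> a b _ _; exact: HM.
split; first exact: HX.
by move=> th ph; rewrite key HH addrA.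
Qed.
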